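(* Let $0<q<1$ and $\Sigma\sim\mathrm{Mallows}(\mathbb{Z},q)$. Then for every $j\in\mathbb{Z}$, $$q\,\mathbb{P}(\Sigma(0)=j)\le\mathbb{P}(\Sigma(0)=j+1)\le\frac1q\,\mathbb{P}(\Sigma(0)=j).$$
   Context: For a finite set $A\subseteq\mathbb{Z}$ and a bijection $\pi:A\to A$, $\mathrm{inv}(\pi)$ is the number of pairs $i<j$ in $A$ with $\pi(i)>\pi(j)$, and $\Pi_A\sim\mathrm{Mallows}(A,q)$ means $\mathbb{P}(\Pi_A=\pi)\propto q^{\mathrm{inv}(\pi)}$ over bijections $\pi$ of $A$. For a bijection $\sigma$ of a set $B\subseteq\mathbb{Z}$ and finite $A\subseteq B$, the pattern $\sigma_A:A\to A$ is defined by $\sigma_A(a)=a_{(i)}$ when $\sigma(a)$ is the $i$-th smallest element of $\sigma[A]$, where $a_{(i)}$ is the $i$-th smallest element of $A$. For $0<q<1$, $\mathrm{Mallows}(\mathbb{Z},q)$ is Gnedin and Olshanski's bi-infinite Mallows measure: the law of a random bijection $\Sigma$ of $\mathbb{Z}$ such that $\Sigma_I\sim\mathrm{Mallows}(I,q)$ for every finite interval of integers $I$, and, with $I_n=\{-n,\dots,n\}$, almost surely for every $i\in\mathbb{Z}$ one has $\Sigma_{I_n}(i)=\Sigma(i)$ for all sufficiently large $n$. *)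

(* Defs.v *)
From HB Require Import structures.
From mathcomp Require Import all_boot all_order all_algebra.
From mathcomp Require Import all_classical all_reals all_analysis.
Set Implicit Arguments. Unset Strict Implicit. Unset Printing Implicit Defensive.
Import Order.TTheory GRing.Theory Num.Theory.
Local Open Scope ring_scope.
Local Open Scope classical_set_scope.

Definition in_interval (a : int) (n : nat) (x : int) : Prop :=
  a <= x /\ x < a + n%:Z.

(* Pattern sigma_I of a bijection sigma on the interval I = I(a,n):
   sigma_I(x) = a_(i) where sigma(x) is the i-th smallest element of sigma[I];
   since a_(i) = a + (i-1) and i - 1 = #{y in I | sigma y < sigma x},
   sigma_I(x) = a + #{y in I | sigma y < sigma x}.  (Meaningful for x in I.) *)
Definition pattern (sigma : int -> int) (a : int) (n : nat) (x : int) : int :=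
  a + (#|[set k : 'I_n | sigma (a + (k : nat)%:Z) < sigma x]|)%:Z.

Definition inv_on (pi : int -> int) (a : int) (n : nat) : nat :=
  #|[set kl : 'I_n * 'I_n |
       ((kl.1 : nat) < (kl.2 : nat))%N &&
       (pi (a + (kl.2 : nat)%:Z) < pi (a + (kl.1 : nat)%:Z))]|.

Definition bij_on_interval (pi : int -> int) (a : int) (n : nat) : Prop :=
  (forall x, in_interval a n x -> in_interval a n (pi x)) /\
  (forall x y, in_interval a n x -> in_interval a n y -> pi x = pi y -> x = y).

(* Sigma : T -> (int -> int) has law Mallows(Z, q) on the probability space
   (T, P), following Gnedin--Olshanski as in the paper:
   - Sigma(w) is a bijection of Z for every w;
   - each coordinate Sigma(.)(i) is a (discrete) random variable;
   - for every finite interval I, the pattern Sigma_I is Mallows(I, q):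
     P(Sigma_I = pi) is proportional to q^inv(pi) over bijections pi of I;
   - almost surely, for every i, Sigma_{I_n}(i) = Sigma(i) for all large n,
     where I_n = {-n, ..., n} = I(-n, 2n+1). *)
Definition is_mallows_Z {d : measure_display} {T : measurableType d}
  {R : realType} (P : probability T R) (q : R) (Sigma : T -> int -> int) : Prop :=
  [/\ forall w, bijective (Sigma w),
      forall i j : int, measurable [set w : T | Sigma w i = j],
      forall (a : int) (n : nat), exists c : R,
        forall pi : int -> int, bij_on_interval pi a n ->
          P [set w : T | forall x, in_interval a n x -> pattern (Sigma w) a n x = pi x]
          = (c * q ^+ inv_on pi a n)%:E
    & {ae P, forall w, forall i : int, exists N : nat, forall m : nat, (N <= m)%N ->
          pattern (Sigma w) (- (m%:Z)) (2 * m).+1 i = Sigma w i}].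

(* Main.v *)
Require Import Defs.
From HB Require Import structures.
From mathcomp Require Import all_boot all_order all_algebra.
From mathcomp Require Import all_classical all_reals all_analysis.
From mathcomp Require Import zify ring lra.
Import Order.TTheory GRing.Theory Num.Theory.
Set Implicit Arguments. Unset Strict Implicit. Unset Printing Implicit Defensive.

Definition invc n (f : 'I_n -> 'I_n) : nat :=
  #|[set kl : 'I_n * 'I_n | (kl.1 < kl.2)%N && (f kl.2 < f kl.1)%N]|.

Definition sw n (u v : 'I_n) (z : 'I_n) : 'I_n :=
  if z == u then v else if z == v then u else z.

Lemma swK n (u v : 'I_n) : involutive (sw u v).
Proof.
move=> z; rewrite /sw; case: (z =P u) => [->|zu].
  by case: (v =P u) => [->//|_]; rewrite eqxx.
case: (z =P v) => [->|zv]; first by rewrite eqxx.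
by move/eqP/negbTE: zu => ->; move/eqP/negbTE: zv => ->.
Qed.

Lemma sw_lt n (u v x y : 'I_n) : v = u.+1 :> nat ->
  ~~ ((x \in [:: u; v]) && (y \in [:: u; v])) ->
  (sw u v y < sw u v x)%N = (y < x)%N.
Proof.
move=> huv; rewrite /sw !inE -!val_eqE /= !(fun_if (@nat_of_ord n)) huv.
generalize (nat_of_ord x) (nat_of_ord y) (nat_of_ord u) => x' y' u'.
by repeat (case: eqP => ?); simpl; lia.
Qed.

Lemma cardX_le1 n (f : 'I_n -> 'I_n) (u v : 'I_n) : injective f ->
  (#|[set kl : 'I_n * 'I_n | [&& (kl.1 < kl.2)%N, f kl.1 \in [:: u; v] & f kl.2 \in [:: u; v]]]| <= 1)%N.
Proof.
move=> finj.
  apply/card_le1_eqP => -[k l] -[k' l']; rewrite !inE /=.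
  move=> /and3P[kl fk fl] /and3P[kl' fk' fl'].
  move: fk fl fk' fl'.
  case/orP => /eqP e1; case/orP => /eqP e2; case/orP => /eqP e3; case/orP => /eqP e4.
  all: first [ have ? : k = l by apply: finj; rewrite ?e1 ?e2 ?e3 ?e4
             | have ? : k' = l' by apply: finj; rewrite ?e1 ?e2 ?e3 ?e4
             | have ? : k = k' by apply: finj; rewrite ?e1 ?e2 ?e3 ?e4
             | have ? : k = l' by apply: finj; rewrite ?e1 ?e2 ?e3 ?e4 ].
  all: subst; try by rewrite ltnn in kl *.
  all: try by rewrite ltnn in kl' *.
  all: first [ have ? : l = l' by apply: finj; rewrite ?e1 ?e2 ?e3 ?e4
             | have ? : l = k' by apply: finj; rewrite ?e1 ?e2 ?e3 ?e4 ].
  all: subst => //; lia.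
Qed.

Lemma invc_sw n (f : 'I_n -> 'I_n) (u v : 'I_n) : injective f -> v = u.+1 :> nat ->
  (invc (sw u v \o f) <= (invc f).+1)%N.
Proof.
move=> finj huv; rewrite /invc.
set S' := [set kl : 'I_n * 'I_n | _].
set S := [set kl : 'I_n * 'I_n | _].
set X := [set kl : 'I_n * 'I_n | [&& (kl.1 < kl.2)%N, f kl.1 \in [:: u; v] & f kl.2 \in [:: u; v]]].
have sub : S' \subset S :|: X.
  apply/fintype.subsetP => -[k l]; rewrite !inE /= => /andP[kl H].
  case: (boolP ((f k \in [:: u; v]) && (f l \in [:: u; v]))) => [/andP[h1 h2]|Hn].
    by move: h1 h2; rewrite !in_cons !in_nil !orbF => h1 h2; rewrite kl h1 h2 orbT.
  by rewrite kl -(sw_lt huv Hn) H.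
have X1 : (#|X| <= 1)%N by apply: cardX_le1.
apply: (leq_trans (subset_leq_card sub)).
rewrite cardsU; apply: (leq_trans (leq_subr _ _)).
by rewrite -addn1 leq_add2l.
Qed.

Local Open Scope ring_scope.

Definition rk (s : int -> int) (a : int) (n : nat) (x : int) : nat :=
  #|[set l : 'I_n | s (a + (l : nat)%:Z) < s x]%SET|.

Lemma card_cls (F : finType) (b : pred F) :
  #|[set k : F | b k]%classic| = #|[set k : F | b k]%SET|.
Proof.
apply: eq_card => k; rewrite finset.inE; apply/idP/idP => [/set_mem //|H].
exact: mem_set.
Qed.

Lemma pattern_rk s a n x : pattern s a n x = a + (rk s a n x)%:Z.
Proof. by rewrite /pattern card_cls. Qed.

Lemma rk_lt s a n (k : 'I_n) : (rk s a n (a + (k:nat)%:Z) < n)%N.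
Proof.
rewrite /rk.
have : [set l : 'I_n | s (a + (l : nat)%:Z) < s (a + (k:nat)%:Z)] \proper [set: 'I_n].
  apply/properP; split; first exact: finset.subsetT.
  by exists k; rewrite ?inE ?ltxx.
by move/proper_card; rewrite cardsT card_ord.
Qed.

Lemma rk_proper s a n (k k' : 'I_n) : s (a + (k:nat)%:Z) < s (a + (k':nat)%:Z) ->
  (rk s a n (a + (k:nat)%:Z) < rk s a n (a + (k':nat)%:Z))%N.
Proof.
move=> lt; apply: proper_card; apply/properP; split.
  apply/fintype.subsetP => l; rewrite !inE => H; exact: lt_trans H lt.
by exists k; rewrite ?inE ?ltxx.
Qed.

Lemma rk_inj s a n : injective s -> forall k k' : 'I_n,
  rk s a n (a + (k:nat)%:Z) = rk s a n (a + (k':nat)%:Z) -> k = k'.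
Proof.
move=> sinj k k' E.
case: (ltgtP (s (a + (k:nat)%:Z)) (s (a + (k':nat)%:Z))) => H.
- by have := rk_proper H; rewrite E ltnn.
- by have := rk_proper H; rewrite E ltnn.
- by move/sinj/addrI: H => [] /val_inj.
Qed.

Local Open Scope classical_set_scope.

Section meas.
Context (d : measure_display) (T : measurableType d) (R : realType).

Lemma meas_ffun (F : finType) (b : F -> T -> bool) (Q : pred {ffun F -> bool}) :
  (forall k, measurable [set w | b k w]) -> measurable [set w | Q [ffun k => b k w]].
Proof.
move=> mb.
have -> : [set w | Q [ffun k => b k w]] =
  \big[setU/set0]_(g <- enum {ffun F -> bool} | Q g)
     \big[setI/setT]_(k <- enum F) [set w | b k w = g k].
  rewrite -bigcup_seq_cond; apply/seteqP; split => w /=.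
    move=> Qw; exists [ffun k => b k w]; first by rewrite /= mem_enum Qw.
    by rewrite -bigcap_seq => k _; rewrite /= ffunE.
  move=> [g /andP[_ Qg]]; rewrite -bigcap_seq => H.
  suff -> : [ffun k => b k w] = g by [].
  by apply/ffunP => k; rewrite ffunE; apply: H; rewrite /= mem_enum.
apply: bigsetU_measurable => g _; apply: bigsetI_measurable => k _.
case: (g k); first exact: mb.
have -> : [set w | b k w = false] = ~` [set w | b k w].
  by apply/seteqP; split => w /=; case: (b k w).
exact: measurableC.
Qed.

Variable Sigma : T -> int -> int.
Hypothesis mS : forall i j : int, measurable [set w : T | Sigma w i = j].

Lemma meas_lt x y : measurable [set w | Sigma w x < Sigma w y].
Proof.
have -> : [set w | Sigma w x < Sigma w y] = \bigcup_(p : nat)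
   (match unpickle p : option (int * int) with
    | Some uv => if uv.1 < uv.2 then [set w | Sigma w x = uv.1] `&` [set w | Sigma w y = uv.2] else set0
    | None => set0 end).
  apply/seteqP; split => w /=.
    move=> H; exists (pickle (Sigma w x, Sigma w y)) => //.
    by rewrite pickleK /= H.
  move=> [p _]; case: (unpickle p) => // -[u v] /=.
  by case: ifP => // uv [/= -> ->].
apply: bigcupT_measurable => p; case: (unpickle p) => // -[u v] /=.
by case: ifP => // _; apply: measurableI.
Qed.

Lemma meas_eqfun (X Y : T -> int) : (forall u, measurable [set w | X w = u]) ->
  (forall u, measurable [set w | Y w = u]) -> measurable [set w | X w = Y w].
Proof.
move=> mX mY.
have -> : [set w | X w = Y w] = \bigcup_(p : nat)
   (match unpickle p : option int with
    | Some u => [set w | X w = u] `&` [set w | Y w = u]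
    | None => set0 end).
  apply/seteqP; split => w /=.
    move=> H; exists (pickle (Y w)) => //.
    by rewrite pickleK /= H.
  by move=> [p _]; case: (unpickle p) => // u /= [-> ->].
apply: bigcupT_measurable => p; case: (unpickle p) => // u.
exact: measurableI.
Qed.

Lemma meas_pattern a n x u : measurable [set w | pattern (Sigma w) a n x = u].
Proof.
have -> : [set w | pattern (Sigma w) a n x = u] =
  [set w | (fun g : {ffun 'I_n -> bool} => a + (#|[set l | g l]%SET|)%:Z == u)
       [ffun l : 'I_n => Sigma w (a + (l:nat)%:Z) < Sigma w x]].
  apply/seteqP; split => w /=; rewrite pattern_rk /rk.
    move=> <-; apply/eqP; congr (_ + Posz _); apply: eq_card => l.
    by rewrite !finset.inE ffunE.
  move/eqP => <-; congr (_ + Posz _); apply: eq_card => l.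
  by rewrite !finset.inE ffunE.
exact: (@meas_ffun 'I_n (fun l w => Sigma w (a + (l:nat)%:Z) < Sigma w x)
  (fun g : {ffun 'I_n -> bool} => a + (#|[set l | g l]%SET|)%:Z == u) (fun l => meas_lt _ _)).
Qed.

Lemma meas_A a n (f : 'I_n -> 'I_n) :
  measurable [set w | forall k : 'I_n, rk (Sigma w) a n (a + (k:nat)%:Z) = f k].
Proof.
have -> : [set w | forall k : 'I_n, rk (Sigma w) a n (a + (k:nat)%:Z) = f k] =
  [set w | (fun g : {ffun 'I_n * 'I_n -> bool} =>
      [forall k, #|[set l | g (l, k)]%SET| == f k])
       [ffun kl : 'I_n * 'I_n => Sigma w (a + (kl.1:nat)%:Z) < Sigma w (a + (kl.2 : nat)%:Z)]].
  apply/seteqP; split => w /=.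
    move=> H; apply/forallP => k; rewrite -H /rk; apply/eqP; apply: eq_card => l.
    by rewrite !finset.inE ffunE.
  move=> /forallP H k; rewrite -(eqP (H k)) /rk; apply: eq_card => l.
  by rewrite !finset.inE ffunE.
exact: (@meas_ffun ('I_n * 'I_n)%type (fun kl w => Sigma w (a + (kl.1:nat)%:Z) < Sigma w (a + (kl.2 : nat)%:Z))
  (fun g : {ffun 'I_n * 'I_n -> bool} => [forall k, #|[set l | g (l, k)]%SET| == f k])
  (fun kl => meas_lt _ _)).
Qed.

Lemma meas_rk a n x (u : nat) : measurable [set w | rk (Sigma w) a n x = u].
Proof.
have -> : [set w | rk (Sigma w) a n x = u] = [set w | pattern (Sigma w) a n x = a + u%:Z].
  apply/seteqP; split => w /=; rewrite pattern_rk; first by move=> ->.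
  by move/addrI => [].
exact: meas_pattern.
Qed.

Variable P : probability T R.

Lemma P_bigU (I : choiceType) (s : seq I) (Q : pred I) (A : I -> set T) :
  uniq s -> (forall i, measurable (A i)) ->
  (forall i j, i != j -> A i `&` A j = set0) ->
  P (\big[setU/set0]_(i <- s | Q i) A i) = (\sum_(i <- s | Q i) P (A i))%E.
Proof.
move=> + mA dA; elim: s => [|i s IH] /=; first by rewrite !big_nil measure0.
move=> /andP[ni us]; rewrite !big_cons; case: (Q i); last exact: IH.
have mB : measurable (\big[setU/set0]_(j <- s | Q j) A j).
  by apply: bigsetU_measurable => j _; exact: mA.
rewrite measureU //; first by congr (_ + _)%E; exact: (IH us).
rewrite -bigcup_seq_cond; apply/seteqP; split => // w [Aiw [j /andP[js _] Ajw]].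
have ij : i != j by apply: contraNneq ni => ->.
have : (A i `&` A j) w by split.
by rewrite dA.
Qed.

End meas.


Lemma invc_eq n (F G : 'I_n -> 'I_n) : F =1 G -> invc F = invc G.
Proof. by move=> FG; apply: eq_card => kl; rewrite !finset.inE !FG. Qed.

Section fin.
Context (d : measure_display) (T : measurableType d) (R : realType).
Variable P : probability T R.
Variable q : R.
Hypothesis hq : (0 < q < 1)%R.
Variable Sigma : T -> int -> int.
Hypothesis Hinj : forall w, injective (Sigma w).
Hypothesis mS : forall i j : int, measurable [set w : T | Sigma w i = j].
Variables (a : int) (n' : nat) (c : R).
Local Notation n := n'.+1.
Hypothesis Hc : forall pi : int -> int, bij_on_interval pi a n ->
   P [set w : T | forall x, in_interval a n x -> pattern (Sigma w) a n x = pi x]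
   = (c * q ^+ inv_on pi a n)%:E.

Definition pif (f : 'I_n -> 'I_n) (x : int) : int :=
  a + ((f (inord `|x - a|%N) : nat))%:Z.

Lemma pif_at f (k : 'I_n) : pif f (a + (k:nat)%:Z) = a + (f k : nat)%:Z.
Proof.
rewrite /pif; have -> : a + (k:nat)%:Z - a = (k:nat)%:Z by rewrite addrC addKr.
by rewrite absz_nat inord_val.
Qed.

Lemma in_interval_ord x : in_interval a n x -> exists k : 'I_n, x = a + (k:nat)%:Z.
Proof.
move=> [h1 h2].
have hk : (`|x - a|%N < n)%N by lia.
by exists (Ordinal hk) => /=; lia.
Qed.

Lemma interval_ord (k : 'I_n) : in_interval a n (a + (k:nat)%:Z).
Proof. have := ltn_ord k; rewrite /in_interval; lia. Qed.

Lemma bij_pif f : injective f -> bij_on_interval (pif f) a n.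
Proof.
move=> finj; split.
  by move=> x /in_interval_ord [k ->]; rewrite pif_at; apply: interval_ord.
move=> x y /in_interval_ord [k ->] /in_interval_ord [l ->]; rewrite !pif_at.
by move/addrI => [] /val_inj /finj ->.
Qed.

Definition Aev (f : 'I_n -> 'I_n) :=
  [set w | forall k : 'I_n, rk (Sigma w) a n (a + (k:nat)%:Z) = f k].

Lemma event_pif f : [set w : T | forall x, in_interval a n x -> pattern (Sigma w) a n x = pif f x] = Aev f.
Proof.
apply/seteqP; split => w /=.
  move=> H k; have := H _ (interval_ord k); rewrite pattern_rk pif_at.
  by move/addrI => [].
move=> H x /in_interval_ord [k ->]; by rewrite pattern_rk pif_at H.
Qed.

Lemma inv_pif f : inv_on (pif f) a n = invc f.
Proof.
rewrite /inv_on card_cls; apply: eq_card => kl.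
by rewrite !finset.inE !pif_at ltrD2l ltz_nat.
Qed.

Lemma PA f : injective f -> P (Aev f) = (c * q ^+ invc f)%:E.
Proof. by move=> finj; rewrite -event_pif Hc ?inv_pif //; apply: bij_pif. Qed.

Lemma c_ge0 : (0 <= c)%R.
Proof.
have h := PA (f := id) (fun x y => id).
have h0 : (0 <= P (Aev id))%E by exact: measure_ge0.
rewrite h lee_fin pmulr_lge0 // in h0.
by apply: exprn_gt0; case/andP: hq.
Qed.

Lemma A_disj (f g : {ffun 'I_n -> 'I_n}) : f != g -> Aev f `&` Aev g = set0.
Proof.
move=> fg; apply/seteqP; split => // w [Hf Hg]; move: fg.
suff -> : f = g by rewrite eqxx.
by apply/ffunP => k; have := Hf k; rewrite Hg => /val_inj ->.
Qed.

Lemma E_decomp (k0 u : 'I_n) :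
  [set w | rk (Sigma w) a n (a + (k0:nat)%:Z) = u] =
  \big[setU/set0]_(f : {ffun 'I_n -> 'I_n} | injectiveb f && (f k0 == u)) Aev f.
Proof.
rewrite -bigcup_seq_cond; apply/seteqP; split => w /=.
  move=> H; exists [ffun k : 'I_n => inord (rk (Sigma w) a n (a + (k:nat)%:Z))].
    rewrite /= mem_index_enum /=; apply/andP; split.
      apply/injectiveP => k k'; rewrite !ffunE => /(congr1 val).
      rewrite /= !inordK ?rk_lt //; exact: (rk_inj (@Hinj w)).
    by rewrite ffunE; apply/eqP/val_inj; rewrite /= inordK ?rk_lt.
  by move=> k; rewrite ffunE inordK ?rk_lt.
by move=> [f /andP[_ /andP[_ /eqP fk0]] H]; rewrite H fk0.
Qed.

Definition Ssum (k0 u : 'I_n) : R :=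
  \sum_(f : {ffun 'I_n -> 'I_n} | injectiveb f && (f k0 == u)) c * q ^+ invc f.

Lemma PE (k0 u : 'I_n) :
  P [set w | rk (Sigma w) a n (a + (k0:nat)%:Z) = u] = (Ssum k0 u)%:E.
Proof.
rewrite E_decomp P_bigU ?index_enum_uniq //.
- rewrite /Ssum -sumEFin; apply: eq_bigr => f /andP[/injectiveP fi _].
  exact: PA.
- by move=> f; apply: meas_A.
- exact: A_disj.
Qed.

Lemma Ssum_cmp (k0 u v : 'I_n) : v = u.+1 :> nat ->
  (q * Ssum k0 u <= Ssum k0 v)%R /\ (Ssum k0 v <= q^-1 * Ssum k0 u)%R.
Proof.
move=> huv.
have q0 : (0 <= q)%R by case/andP: hq => /ltW.
have q1 : (q <= 1)%R by case/andP: hq => _ /ltW.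
have qn0 : q != 0 by case/andP: hq => /gt_eqF ->.
pose h := fun g : {ffun 'I_n -> 'I_n} => [ffun k => sw u v (g k)].
have hK : involutive h by move=> g; apply/ffunP => k; rewrite /h !ffunE swK.
have hinj : injective h := inv_inj hK.
have swu : sw u v u = v by rewrite /sw eqxx.
have E1 : Ssum k0 v = \sum_(g : {ffun 'I_n -> 'I_n} | injectiveb g && (g k0 == u))
     c * q ^+ invc (sw u v \o g).
  rewrite /Ssum (reindex_inj hinj); apply: eq_big => g.
    congr andb.
      apply/injectiveP/injectiveP => Hi k k' E.
        by apply: Hi; rewrite !ffunE E.
      by rewrite !ffunE in E; exact: Hi (can_inj (swK u v) E).
    by rewrite ffunE -[X in _ == X]swu (can_eq (swK u v)).
  by move=> _; rewrite (@invc_eq _ _ (sw u v \o g)) // => k; rewrite ffunE.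
rewrite E1 /Ssum !mulr_sumr; split; apply: ler_sum => g /andP[/injectiveP gi _].
  rewrite mulrCA; apply: ler_wpM2l; first exact: c_ge0.
  rewrite -exprS; apply: ler_wiXn2l => //; exact: invc_sw.
rewrite mulrCA; apply: ler_wpM2l; first exact: c_ge0.
set j := invc (sw u v \o g).
have hj : (invc g <= j.+1)%N.
  rewrite (@invc_eq _ g (sw u v \o (sw u v \o g))); last by move=> k /=; rewrite swK.
  apply: invc_sw => //; apply: inj_comp => //; exact: can_inj (swK u v).
apply: (le_trans (y := q^-1 * q ^+ j.+1)).
  by rewrite exprS mulKf.
apply: ler_wpM2l; first by rewrite invr_ge0.
exact: ler_wiXn2l.
Qed.

Lemma fin_cmp (k0 u v : 'I_n) : v = u.+1 :> nat ->
  (q%:E * P [set w | rk (Sigma w) a n (a + (k0:nat)%:Z) = u]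
     <= P [set w | rk (Sigma w) a n (a + (k0:nat)%:Z) = v])%E /\
  (P [set w | rk (Sigma w) a n (a + (k0:nat)%:Z) = v]
     <= (q^-1)%:E * P [set w | rk (Sigma w) a n (a + (k0:nat)%:Z) = u])%E.
Proof. by move=> huv; rewrite !PE -!EFinM !lee_fin; apply: Ssum_cmp. Qed.

End fin.

Lemma main_aux (d : measure_display) (T : measurableType d) (R : realType)
  (P : probability T R) (q : R) (Sigma : T -> int -> int) :
  (0 < q < 1)%R -> is_mallows_Z P q Sigma ->
  forall j : int,
    (q%:E * P [set w : T | Sigma w 0%R = j] <= P [set w : T | Sigma w 0%R = (j + 1)%R])%E /\
    (P [set w : T | Sigma w 0%R = (j + 1)%R] <= (q^-1)%:E * P [set w : T | Sigma w 0%R = j])%E.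
Proof.
move=> hq [Hbij Hm Hmal Hae] j.
have Hinj : forall w, injective (Sigma w) by move=> w; exact: bij_inj (Hbij w).
pose F (m : nat) (j : int) := [set w | pattern (Sigma w) (- (m%:Z)) (2 * m).+1 0 = j].
have mF : forall m j, measurable (F m j) by move=> m j'; exact: meas_pattern.
have step : forall m : nat, (- (m%:Z) <= j)%R -> (j + 1 <= m%:Z)%R ->
   (q%:E * P (F m j) <= P (F m (j+1)%R))%E /\ (P (F m (j+1)%R) <= (q^-1)%:E * P (F m j))%E.
  move=> m h1 h2.
  have [c Hc] := Hmal (- (m%:Z)) (2 * m).+1.
  have hk0 : (m < ((2 * m)%R).+1)%N by change (m < (2 * m).+1)%N; lia.
  have hu : (absz (j + m%:Z)%R < ((2 * m)%R).+1)%N by change (absz (j + m%:Z)%R < (2 * m).+1)%N; lia.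
  have hv : (absz (j + 1 + m%:Z)%R < ((2 * m)%R).+1)%N by change (absz (j + 1 + m%:Z)%R < (2 * m).+1)%N; lia.
  have EF : forall (j' : int) (u' : 'I_(2 * m).+1), j' = - (m%:Z) + (u' : nat)%:Z ->
     F m j' = [set w | rk (Sigma w) (- (m%:Z)) (2 * m).+1
                         (- (m%:Z) + ((Ordinal hk0 : nat))%:Z) = u'].
    move=> j' u' ->; rewrite /F; apply/seteqP; split => w /=; rewrite pattern_rk /=;
      have -> : (- (m%:Z) + m%:Z = 0)%R by rewrite addNr.
      by move/addrI => [].
    by move=> ->.
  rewrite (EF j (Ordinal hu)); last by rewrite /=; lia.
  rewrite (EF (j+1)%R (Ordinal hv)); last by rewrite /=; lia.
  apply: (fin_cmp hq Hinj Hm Hc) => /=; lia.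
pose K (N : nat) := [set w | forall m : nat, (N <= m)%N ->
   pattern (Sigma w) (- (m%:Z)) (2 * m).+1 0 = Sigma w 0].
have mK : forall N, measurable (K N).
  move=> N; have -> : K N = \bigcap_m (if (N <= m)%N then
      [set w | pattern (Sigma w) (- (m%:Z)) (2 * m).+1 0 = Sigma w 0] else setT).
    rewrite /K; apply/seteqP; split => w /=.
      by move=> H m _; case: ifPn => // hm; exact: H m hm.
    by move=> H m hm; have := H m I; rewrite hm.
  apply: bigcapT_measurable => m; case: ifP => _ //.
  by apply: meas_eqfun => u; [exact: meas_pattern | exact: Hm].
have ndK : nondecreasing_seq K.
  move=> N N' hN; apply/subsetPset => w /= H m hm; apply: H; exact: leq_trans hN hm.
case: Hae => N0 [mN0 PN0 sN0].
have cupK : P (\bigcup_N K N) = (1%R)%:E.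
  apply/eqP; rewrite eq_le probability_le1 /=; last exact: bigcupT_measurable _ mK.
  have sub : ~` N0 `<=` \bigcup_N K N.
    move=> w nw.
    have [N HN] : exists N : nat, forall m : nat, (N <= m)%N ->
        pattern (Sigma w) (- (m%:Z)) (2 * m).+1 0 = Sigma w 0.
      have Qw : forall i : int, exists N : nat, forall m : nat, (N <= m)%N ->
          pattern (Sigma w) (- (m%:Z)) (2 * m).+1 i = Sigma w i.
        apply: contrapT => nQ; exact: nw (sN0 w nQ).
      exact: Qw 0.
    by exists N.
  have h1 : P (~` N0) = 1%E by rewrite probability_setC // PN0 sube0.
  rewrite -h1; apply: le_measure => //.
    exact: mem_set (measurableC mN0).
  exact: mem_set (bigcupT_measurable _ mK).
have cvgK : ((fun N => P (K N)) @ \oo --> (1%R)%:E)%classic.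
  rewrite -cupK; exact: nondecreasing_cvg_mu mK (bigcupT_measurable _ mK) ndK.
have fin : forall S, measurable S -> P S = (fine (P S))%:E.
  by move=> S mS'; rewrite fineK // fin_num_measure.
have smallK : forall e : R, (0 < e)%R -> exists N, (0 <= fine (P (~` K N)) <= e)%R.
  move=> e e0; move/fine_cvgP: cvgK => [_ /cvgrPdist_lt /(_ e e0) [N _ HN]].
  exists N; have := HN N (leqnn N) => /= H.
  have e1 : P (~` K N) = (1 - fine (P (K N)))%:E.
    by rewrite probability_setC // {1}(fin _ (mK N)) EFinB.
  have le1 : (fine (P (K N)) <= 1)%R.
    by rewrite -lee_fin -fin //; apply: probability_le1.
  rewrite e1 /=; apply/andP; split; first by rewrite subr_ge0.
  exact: le_trans (ler_norm _) (ltW H).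
have bound : forall (N m : nat) (jj : int), (N <= m)%N ->
  (P [set w | Sigma w 0%R = jj] <= P (F m jj) + P (~` K N))%E /\
  (P (F m jj) <= P [set w | Sigma w 0%R = jj] + P (~` K N))%E.
  move=> N m jj hm.
  have mU1 : measurable (F m jj `|` ~` K N).
    by apply: measurableU; [exact: mF | exact: measurableC].
  have mU2 : measurable ([set w | Sigma w 0 = jj] `|` ~` K N).
    by apply: measurableU; [exact: Hm | exact: measurableC].
  split.
    apply: (@le_trans _ _ (P (F m jj `|` ~` K N))); last first.
      by apply: measureU2; [exact: mF | exact: measurableC].
    apply: le_measure; [exact: mem_set (Hm _ _) | exact: mem_set mU1 |].
    move=> w /= Ew; case: (pselect (K N w)) => [Kw|nKw]; last by right.
    by left; rewrite /F /= (Kw m hm).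
  apply: (@le_trans _ _ (P ([set w | Sigma w 0 = jj] `|` ~` K N))); last first.
    by apply: measureU2; [exact: Hm | exact: measurableC].
  apply: le_measure; [exact: mem_set (mF _ _) | exact: mem_set mU2 |].
  move=> w /= Ew; case: (pselect (K N w)) => [Kw|nKw]; last by right.
  by left; rewrite -(Kw m hm).
have q0 : (0 < q)%R by case/andP: hq.
have q1 : (q < 1)%R by case/andP: hq.
split.
  rewrite (fin _ (Hm 0 j)) (fin _ (Hm 0 (j+1)%R)) -EFinM lee_fin.
  apply/ler_addgt0Pr => e e0.
  have e20 : (0 < e / 2)%R by apply: divr_gt0.
  have [N /andP[k0 ke]] := smallK _ e20.
  pose m := (N + absz j + 1)%N.
  have hN : (N <= m)%N by rewrite /m; lia.
  have [s1 _] := step m ltac:(rewrite /m; lia) ltac:(rewrite /m; lia).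
  have [b1 _] := bound N m j hN.
  have [_ b2] := bound N m (j+1)%R hN.
  move: s1 b1 b2.
  rewrite (fin _ (mF m j)) (fin _ (mF m (j+1)%R)) (fin _ (Hm 0 j)) (fin _ (Hm 0 (j+1)%R)).
  rewrite (fin _ (measurableC (mK N))) -!EFinD -!EFinM !lee_fin /= => s1 b1 b2.
  have hq2 : (0 <= q * (fine (P (F m j)) + fine (P (~` K N)) - fine (P [set w | Sigma w 0 = j])))%R.
    by apply: mulr_ge0; [exact: ltW | rewrite subr_ge0].
  have ke2 : (fine (P (~` K N)) * 2 <= e)%R by rewrite -ler_pdivlMr.
  nra.
rewrite (fin _ (Hm 0 j)) (fin _ (Hm 0 (j+1)%R)) -EFinM lee_fin.
apply/ler_addgt0Pr => e e0.
have r0 : (0 < q^-1)%R by rewrite invr_gt0.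
have er0 : (0 < e / (q^-1 + 1))%R by apply: divr_gt0 => //; apply: addr_gt0.
have [N /andP[k0 ke]] := smallK _ er0.
pose m := (N + absz j + 1)%N.
have hN : (N <= m)%N by rewrite /m; lia.
have [_ s2] := step m ltac:(rewrite /m; lia) ltac:(rewrite /m; lia).
have [b1 _] := bound N m (j+1)%R hN.
have [_ b2] := bound N m j hN.
move: s2 b1 b2.
rewrite (fin _ (mF m j)) (fin _ (mF m (j+1)%R)) (fin _ (Hm 0 j)) (fin _ (Hm 0 (j+1)%R)).
rewrite (fin _ (measurableC (mK N))) -!EFinD -!EFinM !lee_fin /= => s2 b1 b2.
have hq2 : (0 <= q^-1 * (fine (P [set w | Sigma w 0 = j]) + fine (P (~` K N)) - fine (P (F m j))))%R.
  by apply: mulr_ge0; [exact: ltW | rewrite subr_ge0].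
have ke2 : (fine (P (~` K N)) * (q^-1 + 1) <= e)%R.
  by rewrite -ler_pdivlMr //; apply: addr_gt0.
nra.
Qed.

Local Open Scope ereal_scope.

Theorem lemma8p1 (d : measure_display) (T : measurableType d) (R : realType)
  (P : probability T R) (q : R) (Sigma : T -> int -> int) :
  (0 < q < 1)%R -> is_mallows_Z P q Sigma ->
  forall j : int,
    (q%:E * P [set w : T | Sigma w 0%R = j] <= P [set w : T | Sigma w 0%R = (j + 1)%R]) /\
    (P [set w : T | Sigma w 0%R = (j + 1)%R] <= (q^-1)%:E * P [set w : T | Sigma w 0%R = j]).
Proof. exact: main_aux. Qed.
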